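(* Let $g$ be an associative algebra equipped with a nondegenerate symmetric bilinear form $\langle\cdot,\cdot\rangle$ satisfying $\langle u v,w\rangle=\langle u,v w\rangle$ for all $u,v,w\in g$. Let $n\ge 1$ and let $\mathbf{g}=g\oplus\cdots\oplus g$ ($n$ copies) with componentwise multiplication and bilinear form $\langle\langle \mathbf{u},\mathbf{v}\rangle\rangle=\sum_{k=1}^n\langle u_k,v_k\rangle$. Let $\mathbf{A}$ be a linear operator on $\mathbf{g}$, written in components as $(\mathbf{A}(\mathbf{u}))_i=\sum_{j=1}^n A_{ij}(u_j)$ with linear operators $A_{ij}$ on $g$, and suppose $\mathbf{A}$ is skew-symmetric, i.e. $A_{ij}^*=-A_{ji}$ for all $i,j$. Let $\alpha$ be a constant. Then $\mathbf{A}$ satisfies mYB$(\mathbf{A};\alpha)$ on $\mathbf{g}$ if and only if all of the following hold: (1) mYB$(A_{jj};\alpha)$ for every $j=1,\dots,n$; (2) Hom$(A_{ij},A_{jj})$ for every $i\neq j$; (3) for every triple $i<j<k$ and all $X,Y\in g$: $[A_{ij}(X),A_{ik}(Y)]=A_{ik}\big([A_{kj}(X),Y]\big)+A_{ij}\big([X,A_{jk}(Y)]\big)$.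
   Context: $[X,Y]=XY-YX$ denotes the commutator (in $\mathbf{g}$ it is taken componentwise). For a linear operator $X$ on $g$, $X^*$ denotes its adjoint with respect to $\langle\cdot,\cdot\rangle$. For a linear operator $R$ on an associative algebra and a constant $\alpha$, the condition mYB$(R;\alpha)$ means $[R(X),R(Y)]=R\big([R(X),Y]+[X,R(Y)]\big)-\alpha[X,Y]$ for all $X,Y$. For linear operators $S,A$, the condition Hom$(S,A)$ means $[S(X),S(Y)]=S\big([A(X),Y]+[X,A(Y)]\big)$ for all $X,Y$. *)

(* Defs.v *)
From HB Require Import structures.
From mathcomp Require Import all_boot all_order all_algebra.
Set Implicit Arguments. Unset Strict Implicit. Unset Printing Implicit Defensive.
Import GRing.Theory.
Local Open Scope ring_scope.

Section Defs.
Variables (K : fieldType) (V : lmodType K).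

Definition commr (mul : V -> V -> V) (x y : V) : V := mul x y - mul y x.

Definition mYB (mul : V -> V -> V) (R : V -> V) (alpha : K) : Prop :=
  forall X Y : V,
    commr mul (R X) (R Y)
    = R (commr mul (R X) Y + commr mul X (R Y)) - alpha *: commr mul X Y.

Definition HomCond (mul : V -> V -> V) (S A : V -> V) : Prop :=
  forall X Y : V,
    commr mul (S X) (S Y) = S (commr mul (A X) Y + commr mul X (A Y)).

Definition assoc_bilinear_mul (mul : V -> V -> V) : Prop :=
  (forall a x y z, mul (a *: x + y) z = a *: mul x z + mul y z) /\
  (forall a x y z, mul x (a *: y + z) = a *: mul x y + mul x z) /\
  (forall x y z, mul x (mul y z) = mul (mul x y) z).

Definition invariant_form (mul : V -> V -> V) (B : V -> V -> K) : Prop :=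
  (forall a x y z, B (a *: x + y) z = a * B x z + B y z) /\
  (forall x y, B x y = B y x) /\
  (forall x, (forall y, B x y = 0) -> x = 0) /\
  (forall u v w, B (mul u v) w = B u (mul v w)).
End Defs.

Definition bmul (K : fieldType) (V : lmodType K) (n : nat) (mul : V -> V -> V)
  (u v : {ffun 'I_n -> V}) : {ffun 'I_n -> V} :=
  [ffun i => mul (u i) (v i)].

Definition bop (K : fieldType) (V : lmodType K) (n : nat)
  (A : 'I_n -> 'I_n -> {linear V -> V}) (u : {ffun 'I_n -> V}) : {ffun 'I_n -> V} :=
  [ffun i => \sum_(j < n) A i j (u j)].

(* Main.v *)
Require Import Defs.
From HB Require Import structures.
From mathcomp Require Import all_boot all_order all_algebra.
From mathcomp Require Import ring.
Import GRing.Theory.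
Local Open Scope ring_scope.

Section Aux.
Context {K : fieldType} {V : lmodType K} {mul : V -> V -> V} {B : V -> V -> K}.
Hypothesis Hmul : assoc_bilinear_mul mul.
Hypothesis HB : invariant_form mul B.

Lemma mulDl x y z : mul (x + y) z = mul x z + mul y z.
Proof. by have := Hmul; rewrite /assoc_bilinear_mul => -[H _]; rewrite -[x]scale1r H !scale1r. Qed.
Lemma mulDr x y z : mul x (y + z) = mul x y + mul x z.
Proof. by have := Hmul; rewrite /assoc_bilinear_mul => -[_ [H _]]; rewrite -[y]scale1r H !scale1r. Qed.
Lemma mulZl a x z : mul (a *: x) z = a *: mul x z.
Proof. have := Hmul; rewrite /assoc_bilinear_mul => -[H _]. have := H a x 0 z. rewrite addr0 => ->. suff -> : mul 0 z = 0 by rewrite addr0. apply: (addrI (mul 0 z)). by rewrite addr0 -mulDl addr0. Qed.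
Lemma mulZr a x z : mul z (a *: x) = a *: mul z x.
Proof. have := Hmul; rewrite /assoc_bilinear_mul => -[_ [H _]]. have := H a z x 0. rewrite addr0 => ->. suff -> : mul z 0 = 0 by rewrite addr0. apply: (addrI (mul z 0)). by rewrite addr0 -mulDr addr0. Qed.
Lemma mul0l z : mul 0 z = 0.
Proof. by have := mulZl 0 0 z; rewrite !scale0r. Qed.
Lemma mul0r z : mul z 0 = 0.
Proof. by have := mulZr 0 0 z; rewrite !scale0r. Qed.
Lemma mulNl x z : mul (- x) z = - mul x z.
Proof. by rewrite -scaleN1r mulZl scaleN1r. Qed.
Lemma mulNr x z : mul z (- x) = - mul z x.
Proof. by rewrite -scaleN1r mulZr scaleN1r. Qed.

Local Notation c := (commr mul).

Lemma cDl x y z : c (x + y) z = c x z + c y z.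
Proof. by rewrite /commr mulDl mulDr opprD addrACA. Qed.
Lemma cDr x y z : c z (x + y) = c z x + c z y.
Proof. by rewrite /commr mulDl mulDr opprD addrACA. Qed.
Lemma c0l z : c 0 z = 0.
Proof. by rewrite /commr mul0l mul0r subrr. Qed.
Lemma c0r z : c z 0 = 0.
Proof. by rewrite /commr mul0l mul0r subrr. Qed.
Lemma cNl x z : c (- x) z = - c x z.
Proof. by rewrite /commr mulNl mulNr opprB opprK addrC. Qed.
Lemma cNr x z : c z (- x) = - c z x.
Proof. by rewrite /commr mulNl mulNr opprB opprK addrC. Qed.
Lemma cZl a x z : c (a *: x) z = a *: c x z.
Proof. by rewrite /commr mulZl mulZr scalerBr. Qed.
Lemma cA x z : c x z = - c z x.
Proof. by rewrite /commr opprB. Qed.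
Lemma cSl I (r : seq I) (P : pred I) F z :
  c (\sum_(i <- r | P i) F i) z = \sum_(i <- r | P i) c (F i) z.
Proof. exact: (big_morph (fun x => c x z) (fun x y => cDl x y z) (c0l z)). Qed.
Lemma cSr I (r : seq I) (P : pred I) F z :
  c z (\sum_(i <- r | P i) F i) = \sum_(i <- r | P i) c z (F i).
Proof. exact: (big_morph (fun x => c z x) (fun x y => cDr x y z) (c0r z)). Qed.

Lemma BDl x y z : B (x + y) z = B x z + B y z.
Proof. by have := HB; rewrite /invariant_form => -[H _]; rewrite -[x]scale1r H mul1r !scale1r. Qed.
Lemma BC x y : B x y = B y x.
Proof. by have := HB; rewrite /invariant_form => -[_ [H _]]. Qed.
Lemma BDr x y z : B z (x + y) = B z x + B z y.
Proof. by rewrite BC BDl !(BC z). Qed.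
Lemma B0l z : B 0 z = 0.
Proof. have := BDl 0 0 z; rewrite addr0 => h. apply: (addrI (B 0 z)). by rewrite -h addr0. Qed.
Lemma BNl x z : B (- x) z = - B x z.
Proof. apply: (addrI (B x z)). by rewrite -BDl !subrr B0l. Qed.
Lemma BNr x z : B z (- x) = - B z x.
Proof. by rewrite BC BNl BC. Qed.
Lemma BBl x y z : B (x - y) z = B x z - B y z.
Proof. by rewrite BDl BNl. Qed.
Lemma BBr x y z : B z (x - y) = B z x - B z y.
Proof. by rewrite BDr BNr. Qed.
Lemma Binv u v w : B (mul u v) w = B u (mul v w).
Proof. by have := HB; rewrite /invariant_form => -[_ [_ [_ H]]]. Qed.
Lemma Bc a b d : B (c a b) d = B a (c b d).
Proof.
rewrite /commr BBl BBr !Binv; congr (_ - _).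
by rewrite BC Binv.
Qed.
Lemma Bnd x : (forall y, B x y = 0) -> x = 0.
Proof. by have := HB; rewrite /invariant_form => -[_ [_ [H _]]]; apply: H. Qed.

End Aux.

Section Main.
Variables (K : fieldType) (V : lmodType K) (mul : V -> V -> V) (B : V -> V -> K).
Hypothesis Hmul : assoc_bilinear_mul mul.
Hypothesis HB : invariant_form mul B.
Variables (n : nat) (A : 'I_n -> 'I_n -> {linear V -> V}).
Hypothesis Hskew : forall (i j : 'I_n) (x y : V), B (A i j x) y = - B x (A j i y).
Variable alpha : K.

Local Notation c := (commr mul).

Definition D i j k x y :=
  c (A i j x) (A i k y) - (A i k (c (A k j x) y) + A i j (c x (A j k y))).
Definition Full i j k := forall x y,
  D i j k x y = if (i == j) && (i == k) then - (alpha *: c x y) else 0.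

Lemma Dswap i j k x y : D i j k x y = - D i k j y x.
Proof.
rewrite /D [c (A i k y) _]cA [c (A j k y) x]cA [c y (A k j x)]cA !linearN /=.
by rewrite opprB opprK [RHS]addrC -opprD [A i j _ + _]addrC.
Qed.

Lemma Dcyc i j k x y z : B (D i j k x y) z = B (D j k i y z) x.
Proof.
have e1 : B (c (A i j x) (A i k y)) z = - B (A j i (c (A i k y) z)) x.
  by rewrite (Bc HB) Hskew (BC HB).
have e2 : B (A i k (c (A k j x) y)) z = B (A j k (c y (A k i z))) x.
  by rewrite Hskew (Bc HB) Hskew opprK (BC HB).
have e3 : B (A i j (c x (A j k y))) z = - B (c (A j k y) (A j i z)) x.
  by rewrite Hskew (Bc HB) (BC HB).
rewrite /D (BBl HB (c (A i j x) (A i k y))) (BBl HB (c (A j k y) (A j i z))) (BDl HB (A i k _) (A i j _) z) (BDl HB (A j i _) (A j k _) x) e1 e2 e3. ring. Qed.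

Lemma Dcyc0 i j k : (forall a b, D j k i a b = 0) -> forall x y, D i j k x y = 0.
Proof. by move=> H x y; apply: (Bnd HB) => z; rewrite Dcyc H (B0l HB). Qed.

Lemma swapFull i j k : Full i j k -> Full i k j.
Proof.
move=> H x y; rewrite Dswap H andbC; case: ifP => _; last by rewrite oppr0.
by rewrite [c y x]cA scalerN !opprK.
Qed.

Lemma cycFull i j k : ~~ ((i == j) && (i == k)) -> Full j k i -> Full i j k.
Proof.
move=> nij H x y; rewrite (negbTE nij); apply: Dcyc0 => a b; rewrite H.
case: ifP => // /andP [/eqP jk /eqP ji].
by move: nij; rewrite -ji -jk eqxx.
Qed.

Lemma DFull_iff i j k : Full i j k <-> forall x y,
  c (A i j x) (A i k y) = A i k (c (A k j x) y) + A i j (c x (A j k y))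
     + (if (i == j) && (i == k) then - (alpha *: c x y) else 0).
Proof.
split=> H x y; first by rewrite -H /D addrC subrK.
by rewrite /D H addrC addKr.
Qed.

Definition e (j : 'I_n) (x : V) : {ffun 'I_n -> V} := [ffun l => if l == j then x else 0].

Lemma sum_e (F : 'I_n -> V -> V) j x : (forall l, F l 0 = 0) ->
  \sum_(l < n) F l (e j x l) = F j x.
Proof.
move=> F0; rewrite (bigD1 j) //= big1 ?addr0 => [|l /negbTE nl].
  by rewrite ffunE eqxx.
by rewrite ffunE nl F0.
Qed.

Lemma sum_eA i j x : \sum_(l < n) A i l (e j x l) = A i j x.
Proof. by apply: (sum_e (fun l v => A i l v)) => l; rewrite linear0. Qed.

Lemma commr_bmul (u v : {ffun 'I_n -> V}) i : (commr (bmul mul) u v) i = c (u i) (v i).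
Proof. by rewrite /commr /bmul !ffunE. Qed.

Lemma bop_i u i : bop A u i = \sum_(l < n) A i l (u l).
Proof. by rewrite ffunE. Qed.

Lemma subf (f g : {ffun 'I_n -> V}) i : (f - g) i = f i - g i.
Proof. by rewrite !ffunE. Qed.
Lemma addf (f g : {ffun 'I_n -> V}) i : (f + g) i = f i + g i.
Proof. by rewrite !ffunE. Qed.
Lemma scalef a (f : {ffun 'I_n -> V}) i : (a *: f) i = a *: f i.
Proof. by rewrite !ffunE. Qed.

Lemma bigFull : mYB (bmul mul) (bop A) alpha <-> forall i j k, Full i j k.
Proof.
split.
  move=> H i j k; apply/DFull_iff => x y.
  have := congr1 (fun f : {ffun 'I_n -> V} => f i) (H (e j x) (e k y)).
 rewrite /= commr_bmul subf scalef commr_bmul !bop_i.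
  rewrite !sum_eA.
  under eq_bigr => l _ do rewrite addf !commr_bmul !bop_i !sum_eA linearD.
  rewrite big_split /=.
  rewrite (sum_e (fun l v => A i l (c (A l j x) v))); last by move=> l; rewrite (c0r Hmul) linear0.
  rewrite (sum_e (fun l v => A i l (c v (A l k y))) j x); last by move=> l; rewrite (c0l Hmul) linear0.
  move=> ->; congr (_ + _); rewrite !ffunE.
  by case: (i == j); case: (i == k); rewrite /= ?(c0l Hmul) ?(c0r Hmul) ?scaler0 ?oppr0.
move=> H X Y; apply/ffunP => i.
rewrite commr_bmul subf scalef commr_bmul !bop_i.
under [in RHS]eq_bigr => l _ do rewrite addf !commr_bmul !bop_i linearD (cSl Hmul) (cSr Hmul) !linear_sum.
rewrite big_split /= (cSl Hmul).
rewrite [LHS](eq_bigr (fun j => \sum_(k < n) c (A i j (X j)) (A i k (Y k))));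
  last by move=> j _; rewrite (cSr Hmul).
rewrite [LHS](eq_bigr (fun j => \sum_(k < n) (A i k (c (A k j (X j)) (Y k))
    + A i j (c (X j) (A j k (Y k)))
    + (if (i == j) && (i == k) then - (alpha *: c (X j) (Y k)) else 0))));
  last by move=> j _; apply: eq_bigr => k _; exact: ((DFull_iff i j k).1 (H i j k) (X j) (Y k)).
rewrite [LHS](eq_bigr _ (fun j _ => big_split _ _ _ _ _)) big_split /=.
rewrite [X in X + _ = _](eq_bigr _ (fun j _ => big_split _ _ _ _ _)) big_split /=.
congr (_ + _ + _); first by rewrite exchange_big.
have S3 : forall j : 'I_n, \sum_(k < n) (if (i == j) && (i == k) then - (alpha *: c (X j) (Y k)) else 0)
   = if i == j then - (alpha *: c (X j) (Y i)) else 0.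
  move=> j; case: (i == j) => /=; last by rewrite big1.
  rewrite (bigD1 i) //= eqxx big1 ?addr0 // => k nk.
  by rewrite eq_sym (negbTE nk).
rewrite (eq_bigr _ (fun j _ => S3 j)) (bigD1 i) //= eqxx big1 ?addr0 // => j nj.
by rewrite eq_sym (negbTE nj).
Qed.

Lemma ltne {a b : 'I_n} : (a < b)%N -> a != b.
Proof. by move=> lab; rewrite -(inj_eq val_inj) /= neq_ltn lab. Qed.

Lemma condsFull : (forall i j k, Full i j k) <->
  [/\ (forall j : 'I_n, mYB mul (A j j) alpha),
      (forall i j : 'I_n, i != j -> HomCond mul (A i j) (A j j)) &
      (forall (i j k : 'I_n), (i < j)%N -> (j < k)%N -> forall X Y : V,
         commr mul (A i j X) (A i k Y)
         = A i k (commr mul (A k j X) Y) + A i j (commr mul X (A j k Y)))].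
Proof.
split.
  move=> H; split.
  - by move=> j X Y; rewrite ((DFull_iff j j j).1 (H j j j)) eqxx /= (linearD (A j j) (c (A j j X) Y)).
  - by move=> i j nij X Y; rewrite ((DFull_iff i j j).1 (H i j j)) (negbTE nij) /= addr0 (linearD (A i j) (c (A j j X) Y)).
  - move=> i j k lij ljk X Y; rewrite ((DFull_iff i j k).1 (H i j k)).
    by rewrite (negbTE (ltne lij)) /= addr0.
move=> [F1 F2 F3].
have G1 : forall j, Full j j j.
  by move=> j; apply/DFull_iff => x y; rewrite F1 eqxx /= (linearD (A j j) (c (A j j x) y)).
have G2 : forall i j, i != j -> Full i j j.
  by move=> i j nij; apply/DFull_iff => x y; rewrite F2 // (negbTE nij) /= addr0 (linearD (A i j) (c (A j j x) y)).
have G3 : forall i j k : 'I_n, (i < j)%N -> (j < k)%N -> Full i j k.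
  by move=> i j k lij ljk; apply/DFull_iff => x y; rewrite F3 // (negbTE (ltne lij)) /= addr0.
have G4 : forall i k : 'I_n, i != k -> Full i i k.
  move=> i k nik; apply: cycFull; first by rewrite eqxx (negbTE nik).
  apply: cycFull; first by rewrite (negbTE nik).
  by apply: G2; rewrite eq_sym.
have Gd : forall a b c : 'I_n, (a < b)%N -> (b < c)%N ->
   [/\ Full a b c, Full a c b & Full b a c] /\ [/\ Full b c a, Full c a b & Full c b a].
  move=> a b c lab lbc.
  have lac := ltn_trans lab lbc.
  have Fabc := G3 a b c lab lbc.
  have Fcab : Full c a b by apply: cycFull => //; rewrite eq_sym (negbTE (ltne lac)).
  have Fbca : Full b c a by apply: cycFull => //; rewrite (negbTE (ltne lbc)).
  by split; split => //; apply: swapFull.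
move=> i j k.
case: (eqVneq i j) => [<-|nij].
  by case: (eqVneq i k) => [<-|nik]; [exact: G1 | exact: G4].
case: (eqVneq i k) => [<-|nik]; first exact: swapFull (G4 _ _ nij).
case: (eqVneq j k) => [<-|njk]; first exact: G2.
have ne : forall a b : 'I_n, a != b -> (a : nat) <> b.
  by move=> a b nab eab; move/val_inj: eab nab => ->; rewrite eqxx.
case: (ltngtP i j) => [lij|lji|/(ne _ _ nij)//];
case: (ltngtP j k) => [ljk|lkj|/(ne _ _ njk)//];
case: (ltngtP i k) => [lik|lki|/(ne _ _ nik)//].
all: try by have [[] ? ? ? [] ? ? ?] := Gd _ _ _ lij ljk.
all: try by have := ltn_trans lij ljk; rewrite ltnNge => /negP []; apply: ltnW.
all: try by have [[] ? ? ? [] ? ? ?] := Gd _ _ _ lik lkj.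
all: try by have [[] ? ? ? [] ? ? ?] := Gd _ _ _ lki lij.
all: try by have [[] ? ? ? [] ? ? ?] := Gd _ _ _ lji lik.
all: try by have [[] ? ? ? [] ? ? ?] := Gd _ _ _ ljk lki.
all: try by have [[] ? ? ? [] ? ? ?] := Gd _ _ _ lkj lji.
all: try by have := ltn_trans lkj lji; rewrite ltnNge => /negP []; apply: ltnW.
Qed.

End Main.

Theorem proposition3 (K : fieldType) (V : lmodType K)
  (mul : V -> V -> V) (B : V -> V -> K)
  (Hmul : assoc_bilinear_mul mul) (HB : invariant_form mul B)
  (n : nat) (Hn : (0 < n)%N)
  (A : 'I_n -> 'I_n -> {linear V -> V})
  (Hskew : forall (i j : 'I_n) (x y : V), B (A i j x) y = - B x (A j i y))
  (alpha : K) :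
  mYB (bmul mul) (bop A) alpha <->
  [/\ (forall j : 'I_n, mYB mul (A j j) alpha),
      (forall i j : 'I_n, i != j -> HomCond mul (A i j) (A j j)) &
      (forall (i j k : 'I_n), (i < j)%N -> (j < k)%N -> forall X Y : V,
         commr mul (A i j X) (A i k Y)
         = A i k (commr mul (A k j X) Y) + A i j (commr mul X (A j k Y)))].
Proof.
apply: (iff_trans (bigFull _ _ _ Hmul _ A alpha)); exact: (condsFull _ _ _ _ HB _ _ Hskew).
Qed.
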